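(* Define $f:\mathbb{N}\to\mathbb{N}$ by $f(n)=n$ if $n$ is even and $f(n)=\frac{n+1}{2}$ if $n$ is odd, and let $f^{\downarrow}(n)$ be the first even value in the sequence $n, f(n), f(f(n)), \dots$ (obtained by applying $f$ repeatedly until the result is even). Then every fence of even cardinality is locally unsymmetric, and every (upper or lower) fence of odd cardinality $n\ge3$ is retractable to the $f^{\downarrow}(n)$-fence.
   Context: An $n$-fence is a poset of $n$ elements $a_1,\dots,a_n$ whose order is generated by alternating relations $a_1<a_2>a_3<\cdots a_n$ (lower fence) or $a_1>a_2<a_3>\cdots a_n$ (upper fence); for even $n$ these coincide up to isomorphism. Notation: $\ell(X)$ is the cardinality of a longest chain of a poset $X$. A subset $A$ of a poset $X$ is maximally ordered in $X$ if $|\{(a,b)\in A\times A:a<b\}|$ is maximal among subsets of $X$ of cardinality $|A|$. For $\sigma\in\mathrm{Aut}(P)$, $\Sigma(\sigma)=\{a:\sigma(a)\ne a\}$. For finite $Q$ and $r\ge2$: $\sigma\in\mathrm{Aut}(P)$ is a $(Q,r)$-generator if there exist subsets $S_0,\dots,S_{r-1}\subset\Sigma(\sigma)$, each isomorphic to $Q$, which are smallest maximally ordered subsets of $\Sigma(\sigma)$ with $\sigma(S_i)=S_{(i+1)\bmod r}$, $\ell(S_i)=\ell(\Sigma(\sigma))$, $\bigcup_iS_i=\Sigma(\sigma)$; distinct $S_i,S_j$ are $(Q,r)$-symmetric subsets. Elements $a,b$ are $(Q,r,0)$-symmetric if $a=b$; $(Q,r,1)$-symmetric if there are $(Q,r)$-symmetric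 subsets $A,B$ with generator $\sigma$, $a\in A$, $b=\sigma^q(a)\in B$, $1\le q<r$; for $n\ge2$, $(Q,r,n)$-symmetric if not $(Q,r,j)$-symmetric for $j<n$ but there exist $c$, $j<n$ with $a$ $(Q,r,j)$-symmetric to $c$ and $c$ $(Q,r,n-j)$-symmetric to $b$; $(Q,r)$-symmetric if $(Q,r,n)$-symmetric for some $n\ge0$ (an equivalence relation). $P\oslash_rQ$ is the quotient poset of equivalence classes with $E\le F$ iff some $e\in E$, $f\in F$ satisfy $e\le f$. $P$ is locally symmetric if $P\oslash_rQ\not\cong P$ for some finite $Q$ and $r\ge2$, and locally unsymmetric otherwise. $P$ is retractable to $\tilde P$ if there is a sequence of pairs $(Q_1,r_1),(Q_2,r_2),\dots$ with $\tilde P\cong(\cdots((P\oslash_{r_1}Q_1)\oslash_{r_2}Q_2)\cdots)$ and $\tilde P\not\cong P$. *)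

(* Defs.v *)
From HB Require Import structures.
From mathcomp Require Import all_boot all_fingroup.
From mathcomp Require Import boolp.

Set Implicit Arguments.
Unset Strict Implicit.
Unset Printing Implicit Defensive.

(* A finite poset: a finite carrier with an order relation (the quotient
   construction below produces a relational structure of the same kind). *)
Record fposet := FPoset { fp_sort :> finType; fp_le : rel fp_sort }.

Section Posets.
Variable P : fposet.
Local Notation T := (fp_sort P).
Local Notation le := (@fp_le P).

Definition fp_lt (a b : T) : bool := (a != b) && le a b.

Definition chainb (C : {set T}) : bool :=
  [forall a in C, forall b in C, le a b || le b a].
Definition ell (X : {set T}) : nat :=
  \max_(C : {set T} | (C \subset X) && chainb C) #|C|.

Definition npairs (A : {set T}) : nat :=
  #|[set p : T * T | [&& p.1 \in A, p.2 \in A & fp_lt p.1 p.2]]|.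

Definition max_ordered (X A : {set T}) : Prop :=
  A \subset X /\
  forall B : {set T}, B \subset X -> #|B| = #|A| -> npairs B <= npairs A.

Definition is_aut (s : {perm T}) : Prop := forall a b, le (s a) (s b) = le a b.

Definition Sigma (s : {perm T}) : {set T} := [set a | s a != a].

Definition iso_sub (S : {set T}) (Q : fposet) : Prop :=
  exists f : Q -> T, [/\ injective f, f @: setT = S &
                         forall x y, le (f x) (f y) = fp_le x y].

(* a family S_0..S_{r-1} satisfying the conditions of a generator, except
   isomorphism to Q and minimality *)
Definition family_ok (s : {perm T}) (r : nat) (S : nat -> {set T}) : Prop :=
  (forall i, i < r ->
     [/\ S i \subset Sigma s, max_ordered (Sigma s) (S i),
         s @: S i = S (i.+1 %% r) & ell (S i) = ell (Sigma s)]) /\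
  \bigcup_(i < r) S i = Sigma s.

(* s is a (Q,r)-generator, witnessed by the family S of (Q,r)-symmetric subsets;
   "smallest": no family with the same properties has smaller members *)
Definition generator_fam (Q : fposet) (r : nat) (s : {perm T})
  (S : nat -> {set T}) : Prop :=
  [/\ 2 <= r, is_aut s, family_ok s r S,
      (forall i, i < r -> iso_sub (S i) Q) &
      (forall S', family_ok s r S' -> #|S 0| <= #|S' 0|)].

Definition sym1 (Q : fposet) (r : nat) (a b : T) : Prop :=
  exists s S, generator_fam Q r s S /\
   exists i j q, [/\ i < r, j < r, S i != S j, a \in S i &
                 [/\ 1 <= q < r, b = (s ^+ q)%g a & b \in S j]].

(* (Q,r,n)-symmetric (without the minimality clause, which does not affect
   the relation "(Q,r,n)-symmetric for some n") *)
Inductive symN (Q : fposet) (r : nat) : nat -> T -> T -> Prop :=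
| symN0 a : symN Q r 0 a a
| symN1 a b : sym1 Q r a b -> symN Q r 1 a b
| symNS n j a c b : 1 <= j < n -> symN Q r j a c -> symN Q r (n - j) c b ->
    symN Q r n a b.

Definition symm (Q : fposet) (r : nat) (a b : T) : Prop :=
  exists n, symN Q r n a b.

Definition sym_class (Q : fposet) (r : nat) (a : T) : {set T} :=
  [set b | `[< symm Q r a b >]].
Definition sym_classes (Q : fposet) (r : nat) : {set {set T}} :=
  [set sym_class Q r a | a in T].

End Posets.

Definition quot_sort (P Q : fposet) (r : nat) : finType :=
  {C : {set P} | C \in sym_classes P Q r}.
Definition quot_le (P Q : fposet) (r : nat) : rel (quot_sort P Q r) :=
  fun E F => [exists e in val E, exists f in val F, fp_le e f].
Definition quot (P Q : fposet) (r : nat) : fposet :=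
  @FPoset (quot_sort P Q r) (@quot_le P Q r).

Definition fp_iso (P P' : fposet) : Prop :=
  exists f : P -> P', bijective f /\ forall a b, fp_le (f a) (f b) = fp_le a b.

Definition locally_symmetric (P : fposet) : Prop :=
  exists (Q : fposet) (r : nat), 2 <= r /\ ~ fp_iso (quot P Q r) P.
Definition locally_unsymmetric (P : fposet) : Prop := ~ locally_symmetric P.

Definition iter_quot (P : fposet) (s : seq (fposet * nat)) : fposet :=
  foldl (fun X qr => quot X qr.1 qr.2) P s.

Definition retractable (P P' : fposet) : Prop :=
  exists s : seq (fposet * nat),
    [/\ all (fun qr => 2 <= qr.2) s, fp_iso (iter_quot P s) P' & ~ fp_iso P' P].

(* fences on 'I_n (0-indexed: element i is a_{i+1}).
   up = false: lower fence a_1 < a_2 > a_3 < ...  (even indices minimal)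
   up = true : upper fence a_1 > a_2 < a_3 > ...  (odd indices minimal) *)
Definition fence_le (up : bool) (n : nat) : rel 'I_n :=
  fun i j => (i == j) || ((odd i == up) && ((j == i.+1 :> nat) || (i == j.+1 :> nat))).
Definition fence (up : bool) (n : nat) : fposet := FPoset (@fence_le up n).

(* f(n) = n for n even, (n+1)/2 for n odd; f_down n = first even value of
   n, f n, f (f n), ...  (fuel n suffices for n >= 2) *)
Definition fmap (n : nat) : nat := if odd n then n.+1./2 else n.
Fixpoint fdown_aux (fuel n : nat) : nat :=
  if ~~ odd n then n else
  match fuel with 0 => n | k.+1 => fdown_aux k (fmap n) end.
Definition fdown (n : nat) : nat := fdown_aux n n.

(* Main.v *)
Require Import Defs.
From mathcomp Require Import all_boot all_fingroup.
From mathcomp Require Import boolp.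
From mathcomp Require Import zify.
Set Implicit Arguments.
Unset Strict Implicit.
Unset Printing Implicit Defensive.

Lemma fp_iso_sym (A B : fposet) : fp_iso A B -> fp_iso B A.
Proof.
case=> f [[g fg gf] hf]; exists g; split; first by exists f.
by move=> a b; rewrite -hf !gf.
Qed.

Lemma fp_iso_trans (A B C : fposet) : fp_iso A B -> fp_iso B C -> fp_iso A C.
Proof.
case=> f [bf hf] [g [bg hg]]; exists (g \o f); split; first exact: bij_comp.
by move=> a b /=; rewrite hg hf.
Qed.

Lemma fp_iso_card (A B : fposet) : fp_iso A B -> #|A| = #|B|.
Proof. by case=> f [bf _]; apply: bij_eq_card bf. Qed.

Definition adj (i j : nat) := (i == j.+1) || (j == i.+1).

Lemma fence_cmp up N (i j : 'I_N) :
  fence_le up i j || fence_le up j i = (i == j) || adj i j.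
Proof.
rewrite /fence_le /adj; case: i j => [i Hi] [j Hj] /=.
rewrite [Ordinal Hi == _]/eq_op /= [Ordinal Hj == _]/eq_op /=.
case: (i =P j) => [->|ne]; first by rewrite eqxx.
rewrite /=.
have [e|e] := boolP (i == j.+1).
  have oi : odd i = ~~ odd j by rewrite (eqP e).
  by rewrite oi /= ?orbT; case: (odd j); case: up; rewrite ?orbT.
have [e'|e'] := boolP (j == i.+1).
  have oj : odd j = ~~ odd i by rewrite (eqP e').
  by rewrite oj /= ?orbT; case: (odd i); case: up; rewrite ?orbT.
by rewrite /= !andbF orbF; apply/eqP => ji; apply: ne.
Qed.

Lemma aut_fence up n (f : 'I_n.+1 -> 'I_n.+1) : injective f ->
  (forall i j, fence_le up (f i) (f j) = fence_le up i j) ->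
  (forall i, f i = i) \/ (forall i, val (f i) = n - i).
Proof.
move=> finj hf.
have hadj i j : adj (f i) (f j) = adj i j.
  have := fence_cmp up (f i) (f j); rewrite !hf fence_cmp (inj_eq finj).
  by case: (i =P j) => [->|_] //=; rewrite /adj !eqn_leq !ltnn ?andbF.
pose F k := nat_of_ord (f (inord k)).
have Fle k : F k <= n by have := ltn_ord (f (inord k)).
have adjS k : k < n -> adj (F k) (F k.+1).
  move=> kn; rewrite /F hadj /adj !inordK ?eqxx ?orbT //; lia.
have step k : k.+2 <= n -> F k.+2 + F k = (F k.+1).*2.
  move=> kn; have a1 := adjS k (ltnW kn); have a2 := adjS k.+1 kn.
  have ne : F k.+2 != F k.
    apply/negP=> /eqP /val_inj /finj /(congr1 (@nat_of_ord _)); rewrite !inordK; lia.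
  move: a1 a2 ne; rewrite /adj; lia.
have [g fg gf] := injF_bij finj.
have F0 : F 0 = 0 \/ F 0 = n.
  have [//|n0] := eqVneq n 0; first by left; have := Fle 0; lia.
  case: (ltnP 0 (F 0)) => [p0|]; last by left; lia.
  case: (ltnP (F 0) n) => [p1|]; last by right; have := Fle 0; lia.
  exfalso.
  pose a : 'I_n.+1 := inord (F 0).-1.
  pose b : 'I_n.+1 := inord (F 0).+1.
  have ha : adj (g a) (inord 0 : 'I_n.+1).
    rewrite -hadj gf /adj -/(F 0) inordK; lia.
  have hb : adj (g b) (inord 0 : 'I_n.+1).
    rewrite -hadj gf /adj -/(F 0) inordK; lia.
  have : g a = g b.
    apply: val_inj; move: ha hb; rewrite /adj inordK //=; lia.
  move/(congr1 f); rewrite !gf => /(congr1 (@nat_of_ord _)); rewrite !inordK; lia.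
case: F0 => F0.
  left.
  have key k : k <= n -> F k = k.
    elim: k {-2}k (leqnn k) => [|k IH] j.
      by rewrite leqn0 => /eqP ->.
    rewrite leq_eqVlt => /orP [/eqP -> kn|]; last by move=> /IH; apply.
    case: k IH kn => [|k] IH kn.
      by move: (adjS 0 kn); rewrite F0 /adj; lia.
    have := step k kn.
  have h1 : F k = k := IH k ltac:(lia) ltac:(lia).
  have h2 : F k.+1 = k.+1 := IH k.+1 ltac:(lia) ltac:(lia).
  lia.
  move=> i; apply: val_inj; have := key i; rewrite /F inord_val; apply.
  by rewrite -ltnS.
right.
have key k : k <= n -> F k = n - k.
  elim: k {-2}k (leqnn k) => [|k IH] j.
    by rewrite leqn0 => /eqP ->; rewrite F0 subn0.
  rewrite leq_eqVlt => /orP [/eqP -> kn|]; last by move=> /IH; apply.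
  case: k IH kn => [|k] IH kn.
    by move: (adjS 0 kn) (Fle 1); rewrite F0 /adj; lia.
  have := step k kn.
  have h1 : F k = n - k := IH k ltac:(lia) ltac:(lia).
  have h2 : F k.+1 = n - k.+1 := IH k.+1 ltac:(lia) ltac:(lia).
  lia.
move=> i; have := key i; rewrite /F inord_val; apply.
by rewrite -ltnS.
Qed.

Lemma symN_k (X : fposet) (Q : fposet) r (T : eqType) (k : X -> T) :
  (forall a b, sym1 Q r a b -> k a = k b) ->
  forall n a b, symN Q r n a b -> k a = k b.
Proof.
move=> H1 n a b h; induction h as [x|x y hs|m j x c y _ _ IH1 _ IH2].
- by [].
- exact: H1.
- by rewrite IH1 IH2.
Qed.

Lemma quot_fence (X : fposet) (Q : fposet) r up K (k : X -> 'I_K)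
  (sec : 'I_K -> X) :
  cancel sec k ->
  (forall a b, sym1 Q r a b -> k a = k b) ->
  (forall a b, k a = k b -> a = b \/ sym1 Q r a b) ->
  (forall i j, (exists e f, [/\ k e = i, k f = j & fp_le e f]) <->
               fence_le up i j) ->
  fp_iso (quot X Q r) (fence up K).
Proof.
move=> secK H1 H2 Hle.
have cls a : sym_class Q r a = [set b | k b == k a].
  apply/setP => b; rewrite !inE; apply/asboolP/eqP.
    by case=> n /(symN_k H1) ->.
  move=> e; case: (H2 a b (esym e)) => [<-|h].
    by exists 0; constructor.
  by exists 1; constructor.
have mem i : sym_class Q r (sec i) \in sym_classes X Q r.
  exact: imset_f.
pose phi (i : 'I_K) : quot X Q r := Sub (sym_class Q r (sec i)) (mem i).
have phi_inj : injective phi.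
  move=> i j /(congr1 val) /=; rewrite !cls !secK => /setP /(_ (sec i)).
  by rewrite !inE secK eqxx => /esym /eqP.
have phi_sur (E : quot X Q r) : exists i, E = phi i.
  case: E => C HC; case/imsetP: (HC) => a _ eC.
  exists (k a); apply: val_inj => /=; rewrite eC !cls secK.
  by [].
have phi_bij : bijective phi.
  have cc := card_codom phi_inj.
  apply: (inj_card_bij phi_inj).
  rewrite -cc; apply: subset_leq_card.
  by apply/subsetP => E _; case: (phi_sur E) => i ->; exact: codom_f.
apply: fp_iso_sym; exists phi; split => // i j /=.
rewrite /quot_le /= !cls !secK; apply/idP/idP.
  case/existsP=> e /andP [] /[!inE] /eqP ei /existsP [f] /andP [] /[!inE] /eqP fj lef.
  by apply/Hle; exists e, f.
by case/Hle=> e [f [ei fj lef]]; apply/existsP; exists e; rewrite inE ei eqxx /=;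
   apply/existsP; exists f; rewrite inE fj eqxx.
Qed.

Lemma fence_leE up N (i j : 'I_N) :
  fence_le up i j = (nat_of_ord i == nat_of_ord j) || ((odd i == up) && adj i j).
Proof. by rewrite /fence_le /adj [X in _ && X]orbC. Qed.

Lemma sym1_sigma (X Q : fposet) r (a b : X) : sym1 Q r a b ->
  exists s : {perm X}, [/\ is_aut s, a \in Sigma s & exists q, b = (s ^+ q)%g a].
Proof.
case=> s [S [[_ ias [fam _] _ _] [i [j [q [ir jr _ ai [_ eb _]]]]]]].
exists s; split => //; last by exists q.
by case: (fam i ir) => /subsetP sub _ _ _; apply: sub.
Qed.

Lemma even_part up n : ~~ odd n -> locally_unsymmetric (fence up n).
Proof.
move=> ev [Q [r [r2 niso]]]; apply: niso.
have H1 (a b : fence up n) : sym1 Q r a b -> a = b.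
  case/sym1_sigma => s [ias].
  case: n ev s ias a b => [|n] ev s ias a b; first by case: a.
  have [sid|srev] := aut_fence (@perm_inj _ s) ias.
    by rewrite inE sid eqxx.
  exfalso.
  have n1 : 0 < n by case: (n) ev.
  have := ias (inord 0) (inord 1).
  change (fence_le up (s (inord 0)) (s (inord 1)) =
          fence_le up (inord 0 : 'I_n.+1) (inord 1) -> False).
  rewrite !fence_leE !srev !inordK // /adj.
  have on : odd n by move: ev; rewrite /= negbK.
  rewrite !subn0 on /=; case: (up) => /=; lia.
apply: (@quot_fence (fence up n) Q r up n id id) => //.
- by move=> a b ->; left.
- move=> i j; split; first by case=> e [f [-> -> h]].
  by move=> h; exists i, j.
Qed.


Section Generic.
Variable P : fposet.

Lemma ell_mono (A B : {set P}) : A \subset B -> ell A <= ell B.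
Proof.
move=> AB; apply/bigmax_leqP => C /andP [CA ch]; apply: leq_bigmax_cond.
by rewrite ch (subset_trans CA AB).
Qed.

Lemma chain_img (s : {perm P}) (C : {set P}) : is_aut s -> chainb C -> chainb (s @: C).
Proof.
move=> ias ch; apply/forallP => x; apply/implyP => /imsetP [a aC ->].
apply/forallP => y; apply/implyP => /imsetP [b bC ->]; rewrite !ias.
by have := forallP ch a; rewrite aC /= => /forallP /(_ b); rewrite bC.
Qed.

Lemma ell_img (s : {perm P}) (A : {set P}) : is_aut s -> ell A <= ell (s @: A).
Proof.
move=> ias; apply/bigmax_leqP => C /andP [CA ch].
rewrite -(card_imset C (@perm_inj _ s)); apply: leq_bigmax_cond.
by rewrite chain_img // imsetS.
Qed.

Lemma iso_sub_img (s : {perm P}) (A : {set P}) Q : is_aut s -> iso_sub A Q ->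
  iso_sub (s @: A) Q.
Proof.
move=> ias [f [finj fim fle]]; exists (s \o f); split.
- exact: inj_comp (@perm_inj _ s) finj.
- by rewrite imset_comp fim.
- by move=> x y /=; rewrite ias fle.
Qed.

End Generic.

Section OddStep.
Variables (X : fposet) (up : bool) (m : nat).
Hypothesis m0 : 0 < m.
Local Notation N := m.*2.+1.
Variables (h : 'I_N -> X) (g : X -> 'I_N).
Hypotheses (hK : cancel h g) (gK : cancel g h).
Hypothesis hle : forall i j, fp_le (h i) (h j) = fence_le up i j.

Lemma leX a b : fp_le a b = fence_le up (g a) (g b).
Proof. by rewrite -hle !gK. Qed.

Lemma g_inj : injective g. Proof. exact: can_inj gK. Qed.

Lemma revE (i : 'I_N) : nat_of_ord (rev_ord i) = m.*2 - i.
Proof. by rewrite /= subSS. Qed.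

Lemma g_lt x : nat_of_ord (g x) <= m.*2.
Proof. by have := ltn_ord (g x). Qed.

Lemma odd_rev i : i <= m.*2 -> odd (m.*2 - i) = odd i.
Proof. by move=> hi; rewrite oddB // odd_double. Qed.

Lemma fence_le_rev (i j : 'I_N) :
  fence_le up (rev_ord i) (rev_ord j) = fence_le up i j.
Proof.
rewrite !fence_leE !revE odd_rev; last by have := ltn_ord i.
have := ltn_ord i; have := ltn_ord j; rewrite /adj.
case: (odd i == up) => /=; lia.
Qed.

Definition sf x := h (rev_ord (g x)).
Lemma sf_inj : injective sf.
Proof. by move=> x y /(can_inj hK) /rev_ord_inj /g_inj. Qed.
Definition s : {perm X} := perm sf_inj.
Lemma gs x : g (s x) = rev_ord (g x).
Proof. by rewrite permE /sf hK. Qed.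
Lemma gsE x : nat_of_ord (g (s x)) = m.*2 - g x.
Proof. by rewrite gs revE. Qed.
Lemma ssK x : s (s x) = x.
Proof. by apply: g_inj; rewrite !gs rev_ordK. Qed.

Lemma s_aut : is_aut s.
Proof. by move=> a b; rewrite !leX !gs fence_le_rev. Qed.

Lemma SigmaE : Sigma s = [set x | nat_of_ord (g x) != m].
Proof.
apply/setP => x; rewrite !inE; apply/idP/idP.
  apply: contraNN => /eqP e; apply/eqP/g_inj/val_inj => /=.
  by rewrite gs revE e; lia.
apply: contraNN => /eqP e; apply/eqP.
have := congr1 (@nat_of_ord _) (congr1 g e); rewrite gsE; lia.
Qed.

Definition Iv lo hi := [set x | lo <= g x < hi].
Definition L := Iv 0 m.
Definition R := Iv m.+1 N.

Lemma sL : s @: L = R.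
Proof.
apply/setP => y; rewrite !inE; apply/imsetP/idP.
  by case=> x; rewrite inE => hx ->; rewrite gsE; have := g_lt x; lia.
move=> hy; exists (s y); last by rewrite ssK.
by rewrite inE gsE; have := g_lt y; lia.
Qed.

Lemma sR : s @: R = L.
Proof.
apply/setP => y; rewrite !inE; apply/imsetP/idP.
  by case=> x; rewrite inE => hx ->; rewrite gsE; have := g_lt x; lia.
move=> hy; exists (s y); last by rewrite ssK.
by rewrite inE gsE; have := g_lt y; lia.
Qed.


Definition PS (A : {set X}) : {set X * X} :=
  [set p : X * X | [&& p.1 \in A, p.2 \in A & fp_lt p.1 p.2]].
Definition tt_ (p : X * X) : X := if nat_of_ord (g p.1) < g p.2 then p.2 else p.1.

Lemma ltX a b : fp_lt a b = (a != b) && (odd (g a) == up) && adj (g a) (g b).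
Proof.
rewrite /fp_lt leX fence_leE.
have -> : (nat_of_ord (g a) == g b) = (a == b).
  by apply/eqP/eqP => [/val_inj/g_inj|->].
by case: (a =P b) => //= ->.
Qed.

Lemma odd_nS x y : odd x = odd y -> x != y.+1.
Proof. by move=> o; apply/eqP => e; move: o; rewrite e /= ; case: (odd y). Qed.

Lemma tt_inj A : {in PS A &, injective tt_}.
Proof.
case=> a b [a' b']; rewrite !inE /= => /and3P [_ _] /[!ltX] /andP [] /andP [_ /eqP oa] ab.
move=> /and4P [_ _ /andP [_ /eqP oa'] ab'].
have o : odd (g a) = odd (g a') by rewrite oa oa'.
have n1 := odd_nS o; have n2 := odd_nS (esym o).
rewrite /tt_ /= => e.
suff [e1 e2] : nat_of_ord (g a) = g a' /\ nat_of_ord (g b) = g b'.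
  by rewrite (g_inj (val_inj e1)) (g_inj (val_inj e2)).
move: ab ab' n1 n2; rewrite /adj.
case: ifP e => c1; case: ifP => c2 e;
  have /= ge := congr1 (fun x => nat_of_ord (g x)) e;
  rewrite ?c1 ?c2 in c1 c2 *; try move/negbT: c1 => c1; try move/negbT: c2 => c2; lia.
Qed.

Lemma npairs_lt (A : {set X}) (x0 : X) : x0 \in A -> npairs A < #|A|.
Proof.
move=> xA.
case: (arg_minnP (fun x => nat_of_ord (g x)) xA) => xm xmA' xmin.
have xmA : xm \in A := xmA'.
rewrite /npairs -/(PS A) -(card_in_imset (@tt_inj A)).
rewrite (cardsD1 xm A) xmA add1n ltnS; apply: subset_leq_card.
apply/subsetP => y /imsetP [[a b]]; rewrite inE /= => /and3P [aA bA] /[!ltX].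
move=> /andP [] /andP [_ _] ab ->; rewrite /tt_ /=.
case: ifP => lt; rewrite !inE ?aA ?bA andbT; apply/eqP => e.
  by have := xmin a aA; rewrite -e; lia.
by have := xmin b bA; rewrite -e; move: ab; rewrite /adj; lia.
Qed.

Lemma npairs_Iv lo hi : #|Iv lo hi| <= (npairs (Iv lo hi)).+1.
Proof.
rewrite /npairs -/(PS _) -(card_in_imset (@tt_inj _)).
pose y0 : X := h (inord lo).
rewrite (cardsD1 y0) -addn1 addnC; apply: leq_add; last by case: (y0 \in Iv lo hi).
apply: subset_leq_card; apply/subsetP => y; rewrite !inE => /andP [ny /andP [l1 l2]].
have ylo : nat_of_ord (g y) != lo.
  apply: contraNN ny => /eqP e; apply/eqP; by rewrite /y0 -e inord_val gK.
pose z : X := h (inord (g y).-1).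
have gz : nat_of_ord (g z) = (g y).-1.
  by rewrite /z hK inordK //; have := g_lt y; lia.
have zA : z \in Iv lo hi by rewrite inE gz; lia.
have yA : y \in Iv lo hi by rewrite inE l1 l2.
have zy : z != y by apply/eqP => e; move: gz; rewrite e; lia.
apply/imsetP; case oz: (odd (g z) == up).
  exists (z, y); last by rewrite /tt_ /= gz ifT //; lia.
  by rewrite inE /= zA yA ltX zy oz /adj gz /=; apply/orP; right; apply/eqP; lia.
exists (y, z); last by rewrite /tt_ /= gz ifF //; lia.
rewrite inE /= zA yA ltX eq_sym zy /=.
have -> : (odd (g y) == up) = ~~ (odd (g z) == up).
  have -> : nat_of_ord (g y) = (g z).+1 by rewrite gz; lia.
  by rewrite /= oz; case: up oz; case: (odd (g z)).
by rewrite oz /adj gz; apply/orP; left; apply/eqP; lia.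
Qed.

Lemma cmpX a b : fp_le a b || fp_le b a = (a == b) || adj (g a) (g b).
Proof.
rewrite !leX fence_cmp; congr (_ || _).
by apply/eqP/eqP => [/g_inj|->].
Qed.

Lemma L_sub : L \subset Sigma s.
Proof. by apply/subsetP => x; rewrite SigmaE !inE; lia. Qed.
Lemma R_sub : R \subset Sigma s.
Proof. by apply/subsetP => x; rewrite SigmaE !inE; lia. Qed.
Lemma SigmaLR x : x \in Sigma s -> (x \in L) || (x \in R).
Proof. by rewrite SigmaE !inE; have := g_lt x; lia. Qed.

Lemma card_R : #|R| = #|L|.
Proof. by rewrite -sL card_imset //; exact: perm_inj. Qed.

Lemma hL0 : h (inord 0) \in L.
Proof. by rewrite inE hK inordK //; lia. Qed.

Lemma maxL : max_ordered (Sigma s) L.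
Proof.
split; first exact: L_sub.
move=> B _ cB.
have : 0 < #|B| by rewrite cB; apply/card_gt0P; exists (h (inord 0)); exact: hL0.
case/card_gt0P => x0 xB.
have := npairs_lt xB; have := npairs_Iv 0 m; rewrite -/L cB; lia.
Qed.

Lemma maxR : max_ordered (Sigma s) R.
Proof.
split; first exact: R_sub.
move=> B _ cB.
have : 0 < #|B| by rewrite cB card_R; apply/card_gt0P; exists (h (inord 0)); exact: hL0.
case/card_gt0P => x0 xB.
have := npairs_lt xB; have := npairs_Iv m.+1 N; rewrite -/R cB; lia.
Qed.

Lemma ellLR : ell R = ell L.
Proof.
apply/eqP; rewrite eqn_leq; apply/andP; split.
  by rewrite -sR; apply: ell_img; exact: s_aut.
by rewrite -sL; apply: ell_img; exact: s_aut.
Qed.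

Lemma cross x y : x \in L -> y \in R -> ~~ (fp_le x y || fp_le y x).
Proof.
rewrite cmpX !inE /adj => hx hy; apply/negP => /orP [/eqP e|].
  by move: hx hy; rewrite e; lia.
lia.
Qed.

Lemma ellSig : ell L = ell (Sigma s).
Proof.
apply/eqP; rewrite eqn_leq ell_mono ?L_sub //=.
apply/bigmax_leqP => C /andP [CS ch].
have [CL|] := boolP (C \subset L); first by apply: leq_bigmax_cond; rewrite CL ch.
case/subsetPn => y yC yL.
have yR : y \in R.
  by have := SigmaLR (subsetP CS y yC); rewrite (negbTE yL).
have CR : C \subset R.
  apply/subsetP => x xC; have := SigmaLR (subsetP CS x xC).
  case/orP => // xL; exfalso.
  have := forallP ch x; rewrite xC /= => /forallP /(_ y); rewrite yC /=.
  by move/negP: (cross xL yR).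
by rewrite -ellLR; apply: leq_bigmax_cond; rewrite CR ch.
Qed.

Definition S (i : nat) : {set X} := if i == 0 then L else R.

Lemma fam_ok : family_ok s 2 S.
Proof.
split.
  case=> [|[|i]] // _; rewrite /S /=.
    by split; [exact: L_sub | exact: maxL | exact: sL | exact: ellSig].
  by split; [exact: R_sub | exact: maxR | exact: sR | rewrite ellLR ellSig].
rewrite big_ord_recr big_ord_recr big_ord0 /= set0U /S /=.
by apply/setP => x; rewrite SigmaE !inE; have := g_lt x; lia.
Qed.

Lemma iso_L : iso_sub L (fence up m).
Proof.
have wl : m <= N by lia.
exists (fun i => h (widen_ord wl i)); split.
- by move=> i j /(can_inj hK) /(congr1 (@nat_of_ord _)) /= /val_inj.
- apply/setP => y; rewrite inE; apply/imsetP/idP.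
    by case=> i _ ->; rewrite hK /=.
  move=> hy; have hy' : nat_of_ord (g y) < m by [].
  exists (Ordinal hy') => //; rewrite -[LHS]gK; congr h; exact: val_inj.
- move=> i j; rewrite hle.
  by change (fence_le up (widen_ord wl i) (widen_ord wl j) = fence_le up i j); rewrite !fence_leE.
Qed.

Lemma gen : generator_fam (fence up m) 2 s S.
Proof.
split => //.
- exact: s_aut.
- exact: fam_ok.
- case=> [|[|i]] // _; rewrite /S /=; first exact: iso_L.
  by rewrite -sL; apply: iso_sub_img; [exact: s_aut | exact: iso_L].
move=> S' [Hf Hu].
case: (Hf 0 isT) => _ _ e _; rewrite /= in e.
move: Hu; rewrite big_ord_recr big_ord_recr big_ord0 /= set0U -e => Hu.
have c1 : #|Sigma s| <= #|S' 0| + #|S' 0|.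
  rewrite -Hu cardsU card_imset; last exact: perm_inj.
  exact: leq_subr.
have c2 : #|Sigma s| = #|L| + #|L|.
  have -> : Sigma s = L :|: R.
    by apply/setP => x; rewrite SigmaE !inE; have := g_lt x; lia.
  rewrite cardsU card_R.
  have -> : L :&: R = set0 by apply/setP => x; rewrite !inE; lia.
  by rewrite cards0 subn0.
rewrite /S /=; lia.
Qed.

Definition lev (i : nat) := minn i (m.*2 - i).
Definition o (x : X) : 'I_m.+1 := inord (lev (g x)).
Definition sec (i : 'I_m.+1) : X := h (inord i).

Lemma lev_le i : lev i <= m.
Proof. rewrite /lev; lia. Qed.

Lemma oE x : nat_of_ord (o x) = lev (g x).
Proof. by rewrite /o inordK // ltnS lev_le. Qed.

Lemma secK : cancel sec o.
Proof.
move=> i; apply: val_inj => /=; rewrite oE /sec hK inordK /lev; have := ltn_ord i; lia.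
Qed.

Lemma aut_lev (s' : {perm X}) x : is_aut s' -> lev (g (s' x)) = lev (g x).
Proof.
move=> ias.
pose f (i : 'I_N) := g (s' (h i)).
have finj : injective f.
  by move=> i j /g_inj /perm_inj /(can_inj hK).
have hf i j : fence_le up (f i) (f j) = fence_le up i j by rewrite -leX ias hle.
have ex : g (s' x) = f (g x) by rewrite /f gK.
have := g_lt x.
case: (aut_fence finj hf) => [sid|srev]; rewrite ex.
  by rewrite sid.
by rewrite srev /lev; lia.
Qed.

Lemma H1 Q a b : sym1 Q 2 a b -> o a = o b.
Proof.
case/sym1_sigma => s' [ias _ [q ->]]; rewrite permX.
apply: val_inj => /=; rewrite !oE.
elim: q => //= q IH; by rewrite aut_lev.
Qed.

Lemma LneR : S 0 != S 1.
Proof.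
rewrite /S /=; apply/eqP => e; have := hL0; rewrite e inE hK inordK //; lia.
Qed.

Lemma H2 a b : o a = o b -> a = b \/ sym1 (fence up m) 2 a b.
Proof.
move/(congr1 (@nat_of_ord _)); rewrite !oE => el.
have := g_lt a; have := g_lt b => lb la.
have [e|ne] := eqVneq (nat_of_ord (g b)) (g a).
  by left; apply: g_inj; apply: val_inj.
right.
have eb : b = s a.
  apply: g_inj; apply: val_inj => /=; rewrite gsE; move: el; rewrite /lev; lia.
have aS : a \in Sigma s.
  rewrite SigmaE inE; move: el ne; rewrite /lev; lia.
exists s, S; split; first exact: gen.
case/orP: (SigmaLR aS) => [aL|aR].
  exists 0, 1, 1; split => //; first exact: LneR.
  split => //.
  by rewrite /S /= eb -sL; exact: imset_f.
exists 1, 0, 1; split => //; first by rewrite eq_sym; exact: LneR.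
split => //.
by rewrite /S /= eb -sR; exact: imset_f.
Qed.

Lemma odd_lev x : x <= m.*2 -> odd (lev x) = odd x.
Proof. by move=> hx; rewrite /lev /minn; case: ifP => // _; rewrite odd_rev. Qed.

Lemma Hle (i j : 'I_m.+1) :
  (exists e f, [/\ o e = i, o f = j & fp_le e f]) <-> fence_le up i j.
Proof.
split.
  case=> e [f [<- <-]]; rewrite leX !fence_leE !oE.
  have le1 := g_lt e; have le2 := g_lt f.
  case/orP => [/eqP -> |]; first by rewrite eqxx.
  case/andP => /eqP oe ad.
  rewrite odd_lev // oe eqxx /=; apply/orP; right; move: ad; rewrite /adj /lev; lia.
move=> hij; exists (sec i), (sec j); rewrite !secK; split => //.
have hi := ltn_ord i; have hj := ltn_ord j.
have e1 : nat_of_ord (inord i : 'I_N) = i by rewrite inordK //; lia.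
have e2 : nat_of_ord (inord j : 'I_N) = j by rewrite inordK //; lia.
by move: hij; rewrite /sec hle !fence_leE e1 e2.
Qed.

Lemma odd_step_quot : fp_iso (quot X (fence up m) 2) (fence up m.+1).
Proof.
apply: (@quot_fence X (fence up m) 2 up m.+1 o sec secK).
- by move=> a b; apply: H1.
- exact: H2.
- exact: Hle.
Qed.

End OddStep.

Lemma step_iso (X : fposet) up m : 0 < m -> fp_iso (fence up m.*2.+1) X ->
  fp_iso (quot X (fence up m) 2) (fence up m.+1).
Proof. by move=> m0 [h [[g hK gK] hle]]; apply: (@odd_step_quot X up m m0 h g). Qed.

Lemma fp_iso_refl (A : fposet) : fp_iso A A.
Proof. by exists id; split => //; exists id. Qed.

Lemma fence_flip K : ~~ odd K -> fp_iso (fence true K) (fence false K).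
Proof.
move=> ev; exists (@rev_ord K); split; first by exists (@rev_ord K); apply: rev_ordK.
move=> i j; change (fence_le false (rev_ord i) (rev_ord j) = fence_le true i j).
have hi := ltn_ord i; have hj := ltn_ord j.
rewrite !fence_leE /= oddB // (negbTE ev) /=.
case: (odd i) => /=; rewrite /adj; lia.
Qed.

Lemma fence_to_false up K : ~~ odd K -> fp_iso (fence up K) (fence false K).
Proof. by case: up => ev; [exact: fence_flip | exact: fp_iso_refl]. Qed.

Lemma fdown_even k : ~~ odd k -> fdown k = k.
Proof. by rewrite /fdown; case: k => //= k ->. Qed.

Lemma fdown_aux_fuel k1 k2 x : 2 <= x -> x <= k1 -> x <= k2 ->
  fdown_aux k1 x = fdown_aux k2 x.
Proof.
elim: k1 k2 x => [|k1 IH] k2 x x2 xk1 xk2; first by move: x2 xk1; lia.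
case: k2 xk2 => [|k2] xk2; first by move: x2 xk2; lia.
rewrite /=; case ox: (odd x) => //=.
have ex : x = (x./2).*2.+1 by rewrite -[LHS]odd_double_half ox add1n.
set y := x./2 in ex *.
have fx : fmap x = y.+1 by rewrite /fmap ox ex -doubleS doubleK.
apply: IH; rewrite fx; move: x2 xk1 xk2; rewrite ex; lia.
Qed.

Lemma odd_retract n : forall (X : fposet) up, odd n -> 3 <= n ->
  fp_iso (fence up n) X ->
  ~~ odd (fdown n) /\
  exists s : seq (fposet * nat),
    all (fun qr => 2 <= qr.2) s /\ fp_iso (iter_quot X s) (fence false (fdown n)).
Proof.
elim: n {-2}n (leqnn n) => [|n IH] k kn X up ok k3 iso; first by move: kn k3; lia.
pose m := k./2.
have ek : k = m.*2.+1 by rewrite -[LHS]odd_double_half ok add1n.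
have m0 : 0 < m by move: k3; rewrite ek; lia.
rewrite ek in iso.
have q := step_iso m0 iso.
have fd : fdown k = fdown m.+1.
  have fk : fmap k = m.+1 by rewrite /fmap ok ek -doubleS doubleK.
  transitivity (fdown_aux m.*2 (fmap k)); first by rewrite /fdown {1}ek /= ok.
  rewrite fk /fdown; apply: fdown_aux_fuel; lia.
have [ev|od] := boolP (~~ odd m.+1).
  rewrite fd fdown_even //; split => //.
  exists [:: (fence up m, 2)]; split => //=.
  exact: fp_iso_trans q (fence_to_false up ev).
rewrite negbK in od.
have m3 : 3 <= m.+1 by move: od m0; case: (m) => [|[|]].
have [ev' [s' [all' iso']]] := IH m.+1 ltac:(move: kn; rewrite ek; lia) _ up od m3 (fp_iso_sym q).
rewrite fd; split => //.
by exists ((fence up m, 2) :: s'); split.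
Qed.

Theorem mainTheorem8 :
  (forall (up : bool) (n : nat), ~~ odd n -> locally_unsymmetric (fence up n)) /\
  (forall (up : bool) (n : nat), odd n -> 3 <= n ->
     retractable (fence up n) (fence false (fdown n))).
Proof.
split; first exact: even_part.
move=> up n on n3.
have [ev [s [alls iso]]] := odd_retract on n3 (fp_iso_refl (fence up n)).
exists s; split => // /fp_iso_card; rewrite !card_ord => e.
by move: ev; rewrite e on.
Qed.
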